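(* Let $p,q$ be integers with $1+|p|<|q|$ and let $t(x)=x^2+px-q$. Then every polynomial $f\in\mathbb{Z}[x]$ is equivalent modulo $t$ to a reduced polynomial, i.e. there is $\widetilde f(x)=\sum_{i=0}^m b_ix^i\in\mathbb{Z}[x]$ with $|b_i|<|q|$ for all $i$ such that $t$ divides $f-\widetilde f$.
   Context: A polynomial $\sum_i a_ix^i\in\mathbb{Z}[x]$ is called reduced (with respect to $q$) if $|a_i|<|q|$ for all $i$. *)

(* Defs.v *)
From HB Require Import structures.
From mathcomp Require Import all_boot all_order all_algebra.
Set Implicit Arguments. Unset Strict Implicit. Unset Printing Implicit Defensive.
Import Order.TTheory GRing.Theory Num.Theory.
Local Open Scope ring_scope.

(* A polynomial in Z[x] is reduced w.r.t. q if all its coefficients have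
   absolute value < |q|.  Coefficients beyond the degree are 0, so
   quantifying over all i is the same as over i < size p. *)
Definition reduced (q : int) (f : {poly int}) : Prop :=
  forall i : nat, `|f`_i| < `|q|.

(* Main.v *)
Require Import Defs.
From HB Require Import structures.
From mathcomp Require Import all_boot all_order all_algebra.
From mathcomp Require Import zify ring lra.
Import Order.TTheory GRing.Theory Num.Theory.
Local Open Scope ring_scope.

Definition S (f : {poly int}) : int := \sum_(0 <= i < size f) `|f`_i|.

Lemma S_widen (f : {poly int}) n : (size f <= n)%N -> S f = \sum_(0 <= i < n) `|f`_i|.
Proof.
move=> H; rewrite /S (big_cat_nat (leq0n _) H) /=.
rewrite -[LHS]addr0; congr (_ + _); symmetry.
rewrite big_nat_cond big1 // => i /andP[/andP[Hi _] _].
by rewrite nth_default.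
Qed.

Lemma S_ge0 (f : {poly int}) : 0 <= S f.
Proof. by apply: sumr_ge0 => i _. Qed.

Lemma S_add (f g : {poly int}) : S (f + g) <= S f + S g.
Proof.
set n := maxn (size f) (size g).
rewrite (@S_widen _ n (size_polyD f g)) (@S_widen f n) ?leq_maxl //.
rewrite (@S_widen g n) ?leq_maxr // -big_split /=.
by apply: ler_sum => i _; rewrite coefD ler_normD.
Qed.

Lemma decomp (f : {poly int}) : f = (f`_0)%:P + drop_poly 1 f * 'X.
Proof.
apply/polyP => i; rewrite coefD coefC coefMX coef_drop_poly.
by case: i => [|i] /=; rewrite ?addr0 ?add0r ?addn1.
Qed.

Lemma S_decomp (f : {poly int}) : S f = `|f`_0| + S (drop_poly 1 f).
Proof.
rewrite (@S_widen f (size f).+1) // big_nat_recl //.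
rewrite (@S_widen (drop_poly 1 f) (size f)) ?size_drop_poly ?leq_subr //.
by congr (_ + _); apply: eq_bigr => i _; rewrite coef_drop_poly addn1.
Qed.

Lemma S_lin (a b : int) : S (a%:P + b%:P * 'X) <= `|a| + `|b|.
Proof.
have Hs : (size (a%:P + b%:P * 'X)%R <= 2)%N.
  rewrite addrC size_MXaddC; case: ifP => // _.
  by rewrite ltnS size_polyC leq_b1.
rewrite (@S_widen _ 2 Hs) !big_nat_recl // big_geq // addr0.
by rewrite !coefD !coefC !coefMX !coefC /= addr0 add0r.
Qed.

Lemma qr_nat (n m : nat) : (0 < m)%N -> exists c r : int,
  [/\ n%:Z = c * m%:Z + r, 0 <= r, r < m%:Z & 0 <= c].
Proof.
move=> Hm; exists (n %/ m)%N, (n %% m)%N; split => //.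
  by rewrite {1}(divn_eq n m) PoszD PoszM.
by rewrite ltz_nat ltn_pmod.
Qed.

Lemma qr (a q : int) : q != 0 -> exists c r : int,
  [/\ a = c * q + r, `|r| < `|q| & `|a| = `|c| * `|q| + `|r|].
Proof.
move=> Hq.
have Hm : (0 < `|q|%N)%N by rewrite absz_gt0.
have [c0 [r0 [E1 E2 E3 E4]]] := @qr_nat `|a|%N _ Hm.
have [Ha|Ha] := lerP 0 a; have [Hq'|Hq'] := lerP 0 q.
- exists c0, r0; split; nia.
- exists (-c0), r0; split; nia.
- exists (-c0), (-r0); split; nia.
- exists c0, (-r0); split; nia.
Qed.

Lemma main_n (p q : int) (hpq : 1 + `|p| < `|q|) (n : nat) :
  forall f : {poly int}, 2 * S f + (size f)%:Z < n%:Z ->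
  exists2 g : {poly int}, (forall i : nat, `|g`_i| < `|q|) &
    exists h : {poly int}, f - g = h * ('X^2 + p%:P * 'X - q%:P).
Proof.
have Hq : q != 0 by apply/eqP => E; rewrite E normr0 in hpq; lia.
elim: n => [|n IH] f Hf.
  have := S_ge0 f; lia.
have [->|fn0] := eqVneq f 0.
  exists 0; first by move=> i; rewrite coef0 normr0; lia.
  by exists 0; rewrite subr0 mul0r.
set a0 := f`_0; set f1 := drop_poly 1 f.
have [c [r [E1 E2 E3]]] := @qr a0 q Hq.
set f1' := f1 + ((c * p)%:P + c%:P * 'X).
have HS := S_decomp f; rewrite -/a0 -/f1 in HS.
have Hsz : size f1 = (size f - 1)%N by rewrite size_drop_poly.
have Hsf : (0 < size f)%N by rewrite size_poly_gt0.
have Hmeas : 2 * S f1' + (size f1')%:Z < n%:Z.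
  have [c0|cn0] := eqVneq c 0.
    have -> : f1' = f1 by rewrite /f1' c0 mul0r polyC0 mul0r !addr0.
    have := normr_ge0 a0; lia.
  have H1 : S f1' <= S f1 + `|c| * `|p| + `|c|.
    apply: le_trans (S_add _ _) _; rewrite -addrA lerD2l.
    by apply: le_trans (S_lin _ _) _; rewrite normrM.
  have H2 : (size f1' <= maxn (size f - 1) 2)%N.
    apply: leq_trans (size_polyD _ _) _; rewrite Hsz geq_max leq_maxl /=.
    apply: leq_trans (leq_maxr (size f - 1) 2); rewrite addrC size_MXaddC.
    case: ifP => // _; by rewrite ltnS size_polyC leq_b1.
  have H3 : `|c| * `|p| + 2 * `|c| <= `|c| * `|q|.
    have : 0 < `|c| by rewrite normr_gt0.
    nia.
  have := normr_ge0 r; have := S_ge0 f1; lia.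
have [g1 Hg1 [h1 Eh1]] := IH f1' Hmeas.
exists (cons_poly r g1).
  by move=> [|i]; rewrite coef_cons //=; apply: Hg1.
exists (h1 * 'X - c%:P).
have Ef1 : f1 = g1 + h1 * ('X^2 + p%:P * 'X - q%:P) - (c * p)%:P - c%:P * 'X.
  by rewrite -Eh1 /f1'; ring.
rewrite {1}(decomp f) -/a0 -/f1 Ef1 E1 cons_poly_def polyCD !polyCM.
ring.
Qed.

Theorem proposition1 (p q : int) (hpq : 1 + `|p| < `|q|) (f : {poly int}) :
  exists2 g : {poly int}, reduced q g &
    exists h : {poly int}, f - g = h * ('X^2 + p%:P * 'X - q%:P).
Proof.
have [g Hg Hh] := @main_n p q hpq `|2 * S f + (size f)%:Z|.+1 f ltac:(have := S_ge0 f; lia).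
by exists g.
Qed.
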